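(* With $G,H,\Gamma,X,N$ as in the context, let $\mathcal C\subset G$ be a conjugacy class of elements of order two such that no $c\in\mathcal C$ is even and at least one $c\in\mathcal C$ satisfies $c\notin N$. Let $V'\subseteq\mathrm{Ind}_H^GX$ be an irreducible representation of $G$ and $c\in\mathcal C$. Then: (1) if $\Gamma\cong D_n$, $\dim V'^{c=1}=\dim V'^{c=-1}=\tfrac12\dim V'$; (2) if $\Gamma\in\{A_4,S_4,A_5\}$, $\dim V'^{c=-1}<\tfrac23\dim V'$.
   Context: All representations are over an algebraically closed field $E$ of characteristic zero. $G$ is a finite group, $H\trianglelefteq G$ a normal subgroup with a surjection $H\to\Gamma$, where $\Gamma\subset\mathrm{PGL}(V)$ ($\dim V=2$) is a finite subgroup acting irreducibly on $\mathbf P(V)$, so $\Gamma\cong A_4,S_4,A_5$ or $D_n$ (order $2n$, $n\ge3$ odd). $W$ is the trace-zero endomorphisms of $V$ with $\Gamma$ acting by conjugation; $X\subseteq W$ is the unique $\Gamma$-stable subspace on which $\Gamma$ acts irreducibly and faithfully ($X=W$ unless $\Gamma\cong D_n$, when $W=X\oplus\epsilon$ with $\epsilon$ the quadratic character and $\dim X=2$), viewed as an $H$-representation $\Psi'$. Let $\mathrm{Ker}=\ker(H\to\Gamma)$, $N(\mathrm{Ker})$ its normalizer in $G$, and $N$ the preimage in $N(\mathrm{Ker})$ of $\{\alpha\in\mathrm{Aut}(\Gamma):\Psi\circ\alpha\cong\Psi\}$ under the conjugation map $N(\mathrm{Ker})\to\mathrm{Aut}(\Gamma)$, $\Psi$ being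 the representation of $\Gamma$ on $X$. An element $c\in N$ of order two is called even if it maps to the identity in $\mathrm{Aut}(\Gamma)$; elements not in $N$ are not even. *)

(* Defs.v *)
From HB Require Import structures.
From mathcomp Require Import all_boot all_order all_algebra all_fingroup all_solvable all_field all_character.
Set Implicit Arguments. Unset Strict Implicit. Unset Printing Implicit Defensive.
Import GRing.Theory.
Local Open Scope ring_scope.

(* [sigma] realises [Gam] as a finite subgroup of PGL(V), dim V = 2:
   sigma x is a lift in GL_2(E) of the image of x, sigma is multiplicative
   up to scalars, and only the identity maps to a scalar matrix. *)
Definition proj_embedding (E : fieldType) (rT : finGroupType) (Gam : {set rT})
    (sigma : rT -> 'M[E]_2) : Prop :=
  [/\ forall x, x \in Gam -> sigma x \in unitmx,
      forall x y, x \in Gam -> y \in Gam ->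
        exists a : E, sigma (x * y)%g = a *: (sigma x *m sigma y)
    & forall x, x \in Gam -> is_scalar_mx (sigma x) -> x = 1%g].

(* Gam acts irreducibly on P(V): no line of V (row vectors) is fixed by all of Gam. *)
Definition irreducible_on_PV (E : fieldType) (rT : finGroupType) (Gam : {set rT})
    (sigma : rT -> 'M[E]_2) : Prop :=
  forall v : 'rV[E]_2, v != 0 ->
    exists2 x, x \in Gam & ~~ (v *m sigma x <= v)%MS.

(* Matrix (on mxvec-coordinates of 'M_2) of the conjugation action
   M |-> sigma(x)^-1 M sigma(x) (a right action, matching row-vector reps). *)
Definition conj_mx (E : fieldType) (rT : finGroupType) (sigma : rT -> 'M[E]_2)
    (x : rT) : 'M[E]_(2 * 2) :=
  lin_mx (fun M : 'M[E]_2 => invmx (sigma x) *m M *m sigma x).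

(* The rows of P span a subspace of W = trace-zero endomorphisms of V. *)
Definition in_trace_zero (E : fieldType) d (P : 'M[E]_(d, 2 * 2)) : Prop :=
  forall i : 'I_d, \tr (vec_mx (row i P)) = 0.

(* rX is (isomorphic to) the representation Psi of Gam on X: X is the
   Gam-stable subspace of W spanned by the rows of P, Gam acts on it
   irreducibly and faithfully. *)
Definition is_Psi (E : fieldType) (rT : finGroupType) (Gam : {group rT})
    (sigma : rT -> 'M[E]_2) d (rX : mx_representation E Gam d)
    (P : 'M[E]_(d, 2 * 2)) : Prop :=
  [/\ row_free P, in_trace_zero P,
      forall x, x \in Gam -> P *m conj_mx sigma x = rX x *m P,
      mx_irreducible rX & mx_faithful rX].

Section PsiDefs.
Variables (E : fieldType) (gT rT : finGroupType) (G H : {group gT}).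
Variables (f : {morphism H >-> rT}) (d : nat).
Variable (rX : mx_representation E (f @* H) d).

(* n is in N: n normalises Ker = ker f, and Psi o alpha_n ~= Psi where
   alpha_n is the automorphism of Gam = H/Ker induced by conjugation by n,
   i.e. alpha_n (f h) = f (h ^ n)%g; stated after pulling back along the
   surjection f. *)
Definition inN (n : gT) : Prop :=
  n \in 'N_G('ker f)%g /\
  exists2 Q : 'M[E]_d, Q \in unitmx &
    forall h, h \in H -> Q *m rX (f (h ^ n)%g) = rX (f h) *m Q.

Definition even (c : gT) : Prop :=
  [/\ inN c, #[c]%g = 2%N & forall h, h \in H -> f (h ^ c)%g = f h].

(* rG (of dimension m) is Ind_H^G X (Serre's definition): the rows of B
   span an H-stable subspace isomorphic, via f, to X, and the whole space
   is the direct sum of its translates by a transversal of H\G. *)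
Definition is_induced m (rG : mx_representation E G m) (B : 'M[E]_(d, m)) : Prop :=
  [/\ row_free B,
      forall h, h \in H -> B *m rG h = rX (f h) *m B,
      (\sum_(t in transversal (rcosets H G)%g G) <<B *m rG t>> == 1%:M)%MS
    & mxdirect (\sum_(t in transversal (rcosets H G)%g G) <<B *m rG t>>)].

End PsiDefs.

(* Main.v *)
From HB Require Import structures.
From mathcomp Require Import all_boot all_order all_algebra all_fingroup all_solvable all_field all_character.
From Stdlib Require Import Lia.
Require Import Defs.
Set Implicit Arguments. Unset Strict Implicit. Unset Printing Implicit Defensive.
Import GRing.Theory.
Local Open Scope ring_scope.

Ltac natlia := repeat match goal with H : is_true (leq _ _) |- _ => move/leP: H => H end;
  try apply/leP;
  repeat match goal with H : context[addn] |- _ => rewrite addnE in H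
                   | H : context[muln] |- _ => rewrite mulnE in H
                   | H : context[subn] |- _ => rewrite subnE in H end;
  rewrite ?addnE ?mulnE ?subnE; lia.

Section Eig.
Variables (E : fieldType) (m : nat) (C : 'M[E]_m).
Hypothesis hC2 : C *m C = 1%:M.
Hypothesis h2 : (2%:R : E) != 0.

Definition ea k (V : 'M[E]_(k, m)) := \rank (V :&: eigenspace C 1)%MS.
Definition eb k (V : 'M[E]_(k, m)) := \rank (V :&: eigenspace C (-1))%MS.

Lemma eig_cap0 : (eigenspace C 1 :&: eigenspace C (-1))%MS = 0.
Proof.
apply/eqP; rewrite -submx0; set Z := (_ :&: _)%MS.
have h1 : Z *m C = 1 *: Z by apply/eigenspaceP; rewrite capmxSl.
have h3 : Z *m C = (-1) *: Z by apply/eigenspaceP; rewrite capmxSr.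
have : (2%:R : E) *: Z = 0.
  by rewrite -[2%:R]/(1 + 1) scalerDl -{2}(opprK 1) scaleNr -h1 -h3 subrr.
by move/eqP; rewrite scalemx_eq0 (negPf h2) /= => /eqP ->; rewrite submx_refl.
Qed.

Lemma eig_split k (V : 'M[E]_(k, m)) : (V *m C <= V)%MS -> (ea V + eb V)%N = \rank V.
Proof.
move=> sVC; apply/eqP; rewrite eqn_leq; apply/andP; split.
  rewrite /ea /eb -mxrank_sum_cap.
  have -> : ((V :&: eigenspace C 1) :&: (V :&: eigenspace C (-1)))%MS = 0.
    by apply/eqP; rewrite -submx0 -eig_cap0 capmxS ?capmxSr.
  by rewrite mxrank0 addn0 mxrankS // addsmx_sub !capmxSl.
have s1 : (V *m (1%:M + C) <= V :&: eigenspace C 1)%MS.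
  rewrite sub_capmx mulmxDr mulmx1 addmx_sub ?submx_refl //=.
  by apply/eigenspaceP; rewrite mulmxDl -mulmxA hC2 mulmx1 addrC scale1r.
have s2 : (V *m (1%:M - C) <= V :&: eigenspace C (-1))%MS.
  rewrite sub_capmx mulmxBr mulmx1 addmx_sub ?eqmx_opp ?submx_refl //=.
  apply/eigenspaceP; rewrite mulmxBl -mulmxA hC2 mulmx1 scaleN1r opprB //.
have sV : (V <= (V :&: eigenspace C 1) + (V :&: eigenspace C (-1)))%MS.
  have eV : V = (2%:R : E)^-1 *: (V *m (1%:M + C)) + (2%:R : E)^-1 *: (V *m (1%:M - C)).
    have e : (1%:M + C) + (1%:M - C) = (2%:R : E) *: (1%:M : 'M[E]_m).
      by rewrite addrCA addrK -[2%:R]/(1 + 1) scalerDl scale1r.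
    by rewrite -scalerDr -mulmxDr e -scalemxAr mulmx1 scalerA mulVf // scale1r.
  by rewrite {1}eV; apply: addmx_sub_adds; apply: scalemx_sub.
by apply: leq_trans (mxrankS sV) _; rewrite /ea /eb; case: (mxrank_adds_leqif (V :&: eigenspace C 1)%MS (V :&: eigenspace C (-1))%MS).
Qed.


Lemma ea_eqmx k1 k2 (V1 : 'M[E]_(k1, m)) (V2 : 'M[E]_(k2, m)) :
  (V1 :=: V2)%MS -> ea V1 = ea V2 /\ eb V1 = eb V2.
Proof.
by move=> e; split; apply/eqmx_rank/eqmxP/cap_eqmx.
Qed.

Lemma eig_add k1 k2 (S : 'M[E]_(k1, m)) (V : 'M[E]_(k2, m)) :
  (S *m C <= S)%MS -> (V *m C <= V)%MS -> (S :&: V)%MS = 0 ->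
  ea (S + V)%MS = (ea S + ea V)%N /\ eb (S + V)%MS = (eb S + eb V)%N.
Proof.
move=> sS sV dSV.
have sSV : ((S + V)%MS *m C <= S + V)%MS.
  by rewrite addsmxMr addsmxS.
have rSV := mxrank_disjoint_sum dSV.
have hS := eig_split sS; have hV := eig_split sV; have hSV := eig_split sSV.
have d1 : forall a, ((S :&: eigenspace C a) :&: (V :&: eigenspace C a))%MS = 0.
  move=> a; apply/eqP; rewrite -submx0 -dSV capmxS ?capmxSl //.
have l1 : (ea S + ea V <= ea (S + V)%MS)%N.
  rewrite /ea -(mxrank_disjoint_sum (d1 1)) mxrankS // addsmx_sub.
  by rewrite !capmxS ?addsmxSl ?addsmxSr.
have l2 : (eb S + eb V <= eb (S + V)%MS)%N.
  rewrite /eb -(mxrank_disjoint_sum (d1 (-1))) mxrankS // addsmx_sub.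
  by rewrite !capmxS ?addsmxSl ?addsmxSr.
split; natlia.
Qed.

Lemma eig_swap k (W : 'M[E]_(k, m)) : (W :&: W *m C)%MS = 0 ->
  ea (W + W *m C)%MS = \rank W /\ eb (W + W *m C)%MS = \rank W.
Proof.
move=> dW; set S := (W + W *m C)%MS.
have sS : (S *m C <= S)%MS.
  by rewrite addsmxMr -mulmxA hC2 mulmx1 addsmxC submx_refl.
have rS : \rank S = (\rank W + \rank W)%N.
  by rewrite mxrank_disjoint_sum // mxrankMfree // row_free_unit; case: (mulmx1_unit hC2).
have hS := eig_split sS.
have s1 : (W *m (1%:M + C) <= S :&: eigenspace C 1)%MS.
  rewrite sub_capmx mulmxDr mulmx1 addmx_sub_adds ?submx_refl //=.
  by apply/eigenspaceP; rewrite mulmxDl -mulmxA hC2 mulmx1 addrC scale1r.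
have s2 : (W *m (1%:M - C) <= S :&: eigenspace C (-1))%MS.
  rewrite sub_capmx mulmxBr mulmx1 addmx_sub_adds ?eqmx_opp ?submx_refl //=.
  apply/eigenspaceP; rewrite mulmxBl -mulmxA hC2 mulmx1 scaleN1r opprB //.
have sW : (S <= W *m (1%:M + C) + W *m (1%:M - C))%MS.
  have eW : W = (2%:R : E)^-1 *: (W *m (1%:M + C)) + (2%:R : E)^-1 *: (W *m (1%:M - C)).
    have e : (1%:M + C) + (1%:M - C) = (2%:R : E) *: (1%:M : 'M[E]_m).
      by rewrite addrCA addrK -[2%:R]/(1 + 1) scalerDl scale1r.
    by rewrite -scalerDr -mulmxDr e -scalemxAr mulmx1 scalerA mulVf // scale1r.
  have eWC : W *m C = (2%:R : E)^-1 *: (W *m (1%:M + C)) - (2%:R : E)^-1 *: (W *m (1%:M - C)).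
    have e : (1%:M + C) - (1%:M - C) = (2%:R : E) *: C.
      by rewrite opprB addrC addrA subrK -[2%:R]/(1 + 1) scalerDl scale1r.
    by rewrite -scalerBr -mulmxBr e -scalemxAr scalerA mulVf // scale1r.
  rewrite addsmx_sub {1}eW eWC; apply/andP; split; apply: addmx_sub_adds;
    rewrite ?eqmx_opp; apply: scalemx_sub; apply: submx_refl.
have r1 : (\rank (W *m (1%:M + C)) <= \rank W)%N by apply: mxrankM_maxl.
have r2 : (\rank (W *m (1%:M - C)) <= \rank W)%N by apply: mxrankM_maxl.
have r3 := mxrankS sW.
have r4 : (\rank (W *m (1%:M + C) + W *m (1%:M - C))%MS <= \rank (W *m (1%:M + C)) + \rank (W *m (1%:M - C)))%N.
  by case: (mxrank_adds_leqif (W *m (1%:M + C)) (W *m (1%:M - C))).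
have r5 := mxrankS s1; have r6 := mxrankS s2.
rewrite /ea /eb in hS *; natlia.
Qed.

End Eig.

Section Main.
Variables (E : fieldType) (gT rT : finGroupType) (G H : {group gT}).
Hypothesis hHG : (H <| G)%g.
Variable f : {morphism H >-> rT}.
Variable d : nat.
Variable rX : mx_representation E ((f @* H)%g) d.
Hypotheses (hXirr : mx_irreducible rX) (hXf : mx_faithful rX).
Variable m : nat.
Variable rG : mx_representation E G m.

Let sHG : (H \subset G)%g := normal_sub hHG.
Let rH := subg_repr rG sHG.

Lemma HJ h u : h \in H -> u \in G -> (h ^ u)%g \in H.
Proof.
move=> Hh Gu; rewrite memJ_norm //.
by move/andP: hHG => [_ /subsetP nHG]; apply: nHG.
Qed.

Lemma d_gt0 : (0 < d)%N.
Proof.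
case: hXirr => _ nz _; rewrite lt0n; apply: contraNneq nz => d0.
by apply/eqP/matrixP => i; rewrite d0 in i *; case: i.
Qed.

Lemma X_simple (T : 'M[E]_(d, m)) (u : gT) : u \in G -> row_free T ->
  (forall h, h \in H -> T *m rG h = rX (f (h ^ u)%g) *m T) -> mxsimple rH <<T>>%MS.
Proof.
move=> Gu frT hT.
have modT : mxmodule rH <<T>>%MS.
  apply/mxmoduleP => h Hh; rewrite genmxE /=.
  by rewrite (eqmxMr _ (genmxE T)) hT // submxMl.
split=> //.
  rewrite (eqmx_eq0 (genmxE T)); apply: contraTneq frT => ->.
  by rewrite /row_free mxrank0 eq_sym -lt0n d_gt0.
move=> M modM sMT nzM.
have sMT' : (M <= T)%MS by rewrite -(genmxE T).
set Z := M *m pinvmx T.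
have eM : Z *m T = M by rewrite /Z mulmxKpV.
have modZ : mxmodule rX <<Z>>%MS.
  apply/mxmoduleP => x /morphimP [k Hk _ ->].
  rewrite genmxE (eqmxMr _ (genmxE Z)) -(submxMfree _ _ frT).
  have Hh : (k ^ u^-1)%g \in H by rewrite HJ ?groupV.
  have := hT _ Hh; rewrite conjgKV => e.
  rewrite -mulmxA -e mulmxA eM.
  by move/mxmoduleP: modM => /(_ _ Hh).
have nzZ : <<Z>>%MS != 0.
  by rewrite (eqmx_eq0 (genmxE Z)); apply: contraNneq nzM => Z0; rewrite -eM Z0 mul0mx.
case: hXirr => _ _ /(_ _ modZ (submx1 _) nzZ) s1Z.
rewrite genmxE -eM -{1}[T]mul1mx submxMr //.
by rewrite -(genmxE Z).
Qed.


Variable B : 'M[E]_(d, m).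
Hypotheses (hBf : row_free B) (hBH : forall h, h \in H -> B *m rG h = rX (f h) *m B).
Hypothesis hBsum :
  (\sum_(t in transversal (rcosets H G) G) <<B *m rG t>> == 1%:M)%MS.

Lemma block_rep t h : t \in G -> h \in H ->
  B *m rG t *m rG h = rX (f (h ^ t^-1)%g) *m (B *m rG t).
Proof.
move=> Gt Hh; have Hh' : (h ^ t^-1)%g \in H by rewrite HJ ?groupV.
have Gh : h \in G by apply: (subsetP sHG).
rewrite -mulmxA -repr_mxM // (conjgCV t h) (repr_mxM rG (subsetP sHG _ Hh') Gt).
by rewrite mulmxA hBH // mulmxA.
Qed.

Lemma simple_iso W : mxsimple rH W ->
  exists2 u, u \in G & exists2 T : 'M[E]_(d, m), row_free T &
    (forall h, h \in H -> T *m rG h = rX (f (h ^ u)%g) *m T) /\ (T :=: W)%MS.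
Proof.
move=> simW.
have sXG : transversal (rcosets H G) G \subset G.
  exact: transversal_sub (transversalP (rcosets_partition sHG)).
have frt : forall t, t \in G -> row_free (B *m rG t).
  by move=> t Gt; rewrite /row_free mxrankMfree ?row_free_unit ?repr_mx_unit.
have simB : forall t, t \in transversal (rcosets H G) G -> <<B *m rG t>>%MS != 0 ->
    mxsimple rH <<B *m rG t>>%MS.
  move=> t /(subsetP sXG) Gt _; apply: (X_simple (u := (t^-1)%g)); rewrite ?groupV ?frt //.
  by move=> h Hh; rewrite block_rep.
have homV : ((\sum_(t in transversal (rcosets H G) G) <<B *m rG t>>)%MS <= dom_hom_mx rH 1%:M)%MS.
  by apply/hom_mxP => x _; rewrite !mulmx1.
have sWV : (W <= (\sum_(t in transversal (rcosets H G) G) <<B *m rG t>>)%MS *m 1%:M)%MS.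
  by rewrite mulmx1 (eqmxP hBsum) submx1.
have [t Xt [F unitF homF defW]] := hom_mxsemisimple_iso simW simB homV sWV.
have Gt := subsetP sXG t Xt.
exists (t^-1)%g; first by rewrite groupV.
exists (B *m rG t *m F).
  by rewrite /row_free mxrankMfree ?row_free_unit //; apply: frt.
split.
  move=> h Hh; have hF : (B *m rG t <= dom_hom_mx rH F)%MS by rewrite -(genmxE (B *m rG t)).
  move/hom_mxP: hF => /(_ h Hh) /= e.
  by rewrite -[rG h]/(rH h) -e /= block_rep // !mulmxA.
have e1 := eqmxMr F (eqmx_sym (genmxE (B *m rG t))).
exact: (eqmx_trans e1 defW).
Qed.


Variable c : gT.
Hypotheses (hcG : c \in G) (hc2 : (c * c = 1)%g).

Lemma key (T : 'M[E]_(d, m)) u Q : u \in G -> row_free T ->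
  (forall h, h \in H -> T *m rG h = rX (f (h ^ u)%g) *m T) -> T *m rG c = Q *m T ->
  Q *m Q = 1%:M /\ (forall h, h \in H -> Q *m rX (f (h ^ (c ^ u))%g) = rX (f h) *m Q).
Proof.
move=> Gu frT hT hQ; split.
  apply: (row_free_inj frT); rewrite mul1mx -mulmxA -hQ mulmxA -hQ -mulmxA.
  by rewrite -repr_mxM // hc2 repr_mx1 mulmx1.
move=> h' Hh'; set h := (h' ^ u^-1)%g.
have Hh : h \in H by rewrite HJ ?groupV.
have Hhc : (h ^ c)%g \in H by rewrite HJ.
have e1 : ((h ^ c) ^ u)%g = (h' ^ (c ^ u))%g.
  by rewrite /h !conjgE !invMg !invgK !mulgA.
have e2 : (h ^ u)%g = h' by rewrite /h conjgKV.
apply: (row_free_inj frT).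
have GH := subsetP sHG.
rewrite -mulmxA -e1 -hT // mulmxA -hQ -mulmxA -(repr_mxM rG hcG (GH _ Hhc)).
by rewrite -conjgC (repr_mxM rG (GH _ Hh) hcG) mulmxA hT // e2 -!mulmxA hQ.
Qed.


Lemma key_inN (T : 'M[E]_(d, m)) u Q : u \in G -> row_free T ->
  (forall h, h \in H -> T *m rG h = rX (f (h ^ u)%g) *m T) -> T *m rG c = Q *m T ->
  inN G rX (c ^ u)%g.
Proof.
move=> Gu frT hT hQ; have [QQ hQh] := key Gu frT hT hQ.
have [uQ _] := mulmx1_unit QQ.
split; last by exists Q.
rewrite inE groupJ //=; rewrite inE; apply/subsetP => y.
rewrite mem_conjg => Ky.
have Hk : (y ^ (c ^ u)^-1)%g \in H by apply: (subsetP (normal_sub (ker_normal f))).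
have Hy : y \in H by have := HJ Hk (groupJ hcG Gu); rewrite conjgKV.
apply/kerP => //.
have := hQh _ Hk; rewrite conjgKV (mker Ky) repr_mx1 mul1mx => e.
have e' : rX (f y) = rX 1%g.
  by rewrite repr_mx1 -[rX (f y)](mulKmx uQ) e mulVmx.
by apply: (mx_faithful_inj hXf) e' => //; rewrite mem_morphim.
Qed.

Lemma key_even (T : 'M[E]_(d, m)) u a : u \in G -> row_free T ->
  (forall h, h \in H -> T *m rG h = rX (f (h ^ u)%g) *m T) -> T *m rG c = a%:M *m T ->
  forall h, h \in H -> f (h ^ (c ^ u))%g = f h.
Proof.
move=> Gu frT hT hQ h Hh; have [QQ hQh] := key Gu frT hT hQ.
have [uQ _] := mulmx1_unit QQ.
have Hy : (h ^ (c ^ u))%g \in H by rewrite HJ ?groupJ.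
apply: (mx_faithful_inj hXf); rewrite ?mem_morphim //.
rewrite -[rX (f (h ^ (c ^ u))%g)](mulKmx uQ) hQh // scalar_mxC mulKmx //.
Qed.



Hypothesis hco : #[c]%g = 2%N.
Hypothesis hne : forall u, u \in G -> ~ even G rX (c ^ u)%g.
Hypothesis hE : [pchar E] =i pred0.

Let C := rG c.

Lemma CC : C *m C = 1%:M.
Proof. by rewrite /C -repr_mxM // hc2 repr_mx1. Qed.

Lemma two_nz : (2%:R : E) != 0.
Proof.
by have := hE 2; rewrite !inE /= => ->.
Qed.

Lemma scalar_contra W a : mxsimple rH W -> (W <= eigenspace C a)%MS -> False.
Proof.
move=> simW sWa; have [u Gu [T frT [hT eTW]]] := simple_iso simW.
have hQ : T *m rG c = a%:M *m T.
  by rewrite mul_scalar_mx; apply/eigenspaceP; rewrite eTW.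
apply: (hne Gu); split.
- exact: key_inN Gu frT hT hQ.
- by rewrite orderJ.
- exact: key_even Gu frT hT hQ.
Qed.

Lemma fixed_piece W : mxsimple rH W -> (W *m C <= W)%MS ->
  [/\ (0 < ea C W)%N, (0 < eb C W)%N & (ea C W + eb C W)%N = d].
Proof.
move=> simW sWC.
have [u Gu [T frT [hT eTW]]] := simple_iso simW.
have rW : \rank W = d by rewrite -eTW; apply/eqP.
have hs := eig_split CC two_nz sWC.
split; last by rewrite hs.
- rewrite lt0n; apply/negP => /eqP e0; apply: (scalar_contra (a := -1) simW).
  have r : \rank (W :&: eigenspace C (-1))%MS = \rank W by rewrite -hs e0 add0n.
  have h := mxrank_leqif_sup (capmxSl W (eigenspace C (-1))); rewrite r in h.
  by move/leqif_refl: h; rewrite sub_capmx => /andP[].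
- rewrite lt0n; apply/negP => /eqP e0; apply: (scalar_contra (a := 1) simW).
  have r : \rank (W :&: eigenspace C 1)%MS = \rank W by rewrite -hs e0 addn0.
  have h := mxrank_leqif_sup (capmxSl W (eigenspace C 1)); rewrite r in h.
  by move/leqif_refl: h; rewrite sub_capmx => /andP[].
Qed.


Let K := (H <*> <[c]>)%G.
Lemma sKG : (K \subset G)%g.
Proof. by rewrite join_subG sHG cycle_subG hcG. Qed.
Let rK := subg_repr rG sKG.
Lemma HK : (H \subset K)%g.
Proof. exact: joing_subl. Qed.
Lemma cK : c \in K.
Proof. by rewrite (subsetP (joing_subr _ _)) ?cycle_id. Qed.

Lemma modK_HC k (V : 'M[E]_(k, m)) : mxmodule rK V -> mxmodule rH V /\ (V *m C <= V)%MS.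
Proof.
move/mxmoduleP => hV; split; last exact: hV cK.
by apply/mxmoduleP => h Hh; apply: hV; rewrite (subsetP HK).
Qed.

Lemma HC_modK k (V : 'M[E]_(k, m)) : mxmodule rH V -> (V *m C <= V)%MS -> mxmodule rK V.
Proof.
move=> /mxmoduleP hV sVC; rewrite /mxmodule join_subG cycle_subG; apply/andP; split.
  by apply/subsetP => h Hh; rewrite inE (subsetP HK) //= hV.
by rewrite inE cK.
Qed.

Lemma pgK : ([pchar E]^'.-group K)%g.
Proof.
by apply/pgroupP => p pr _; rewrite inE /= hE.
Qed.


Lemma splitK (V S : 'M[E]_m) : mxmodule rK V -> mxmodule rK S -> (S <= V)%MS -> S != 0 ->
  exists V' : 'M[E]_m, [/\ mxmodule rK V', (\rank V' < \rank V)%N,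
     ea C V = (ea C S + ea C V')%N & eb C V = (eb C S + eb C V')%N].
Proof.
move=> modV modS sSV nzS.
have crV := mx_reducibleS modV (submx1 V) (mx_Maschke_pchar rK pgK).
have [V' modV' defV dx] := crV S modS sSV.
move/mxdirect_addsP: dx => dx.
have [_ sS] := modK_HC modS; have [_ sV'] := modK_HC modV'.
have [e1 e2] := eig_add CC two_nz sS sV' dx.
have [f1 f2] := ea_eqmx C defV.
exists V'; split => //.
- by rewrite -defV mxrank_disjoint_sum // -{1}[\rank V']add0n ltn_add2r lt0n mxrank_eq0.
- by rewrite -f1 e1.
- by rewrite -f2 e2.
Qed.

Lemma modHC (W : 'M[E]_m) : mxmodule rH W -> mxmodule rH (W *m C).
Proof.
move=> /mxmoduleP modW; apply/mxmoduleP => h Hh.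
have Hh' : (h ^ c^-1)%g \in H by rewrite HJ ?groupV.
have GH := subsetP sHG.
rewrite /= /C -mulmxA -(repr_mxM rG hcG (GH _ Hh)) (conjgCV c h).
by rewrite (repr_mxM rG (GH _ Hh') hcG) mulmxA submxMr // modW.
Qed.

Lemma swap_piece W : mxsimple rH W -> ~~ (W *m C <= W)%MS ->
  (W :&: W *m C)%MS = 0 /\ mxmodule rK (W + W *m C)%MS.
Proof.
move=> simW nsub; have [modW nzW simW'] := simW.
have modWC := modHC modW.
split; last first.
  apply: HC_modK; first exact: addsmx_module.
  by rewrite addsmxMr -mulmxA CC mulmx1 addsmxC submx_refl.
apply/eqP; apply: contraNT nsub => nz.
have sWZ := simW' _ (capmx_module modW modWC) (capmxSl _ _) nz.
have sWWC : (W <= W *m C)%MS by apply: submx_trans sWZ (capmxSr _ _).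
have r : \rank W = \rank (W *m C).
  by rewrite mxrankMfree // row_free_unit repr_mx_unit.
have h := mxrank_leqif_sup sWWC; rewrite r in h.
by move/leqif_refl: h.
Qed.


Lemma lemA : forall V : 'M[E]_m, mxmodule rK V ->
  ((d <= 2)%N ==> (ea C V == eb C V)) && ((d <= 3)%N ==> (eb C V <= 2 * ea C V)%N).
Proof.
move=> V; move: {2}(\rank V).+1 (ltnSn (\rank V)) => r; elim: r V => // r IH V lt modV.
have [-> | nzV] := eqVneq V 0.
  by rewrite /ea /eb !cap0mx !mxrank0 ?implybT.
have [modHV sVC] := modK_HC modV.
apply: (mxsimple_exists modHV nzV) => [[W simW sWV]].
have [modW nzW _] := simW.
case: (boolP (W *m C <= W)%MS) => sWC.
- have modKW := HC_modK modW sWC.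
  have [V' [modV' ltV' ha hb]] := splitK modV modKW sWV nzW.
  have /andP[/implyP i1 /implyP i2] := IH V' (leq_trans ltV' lt) modV'.
  have [p1 p2 p3] := fixed_piece simW sWC.
  rewrite ha hb; apply/andP; split; apply/implyP => hd.
    by move/eqP: (i1 hd) => e; apply/eqP; natlia.
  by move: (i2 hd) => hh; natlia.
- have [dW modS] := swap_piece simW sWC.
  have sSV : (W + W *m C <= V)%MS.
    by rewrite addsmx_sub sWV (submx_trans (submxMr _ sWV) sVC).
  have nzS : (W + W *m C)%MS != 0.
    by apply: contraNneq nzW => S0; rewrite -submx0 -S0 addsmxSl.
  have [V' [modV' ltV' ha hb]] := splitK modV modS sSV nzS.
  have /andP[/implyP i1 /implyP i2] := IH V' (leq_trans ltV' lt) modV'.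
  have [s1 s2] := eig_swap CC two_nz dW.
  rewrite ha hb s1 s2; apply/andP; split; apply/implyP => hd.
    by move/eqP: (i1 hd) => e; apply/eqP; natlia.
  by move: (i2 hd) => hh; natlia.
Qed.


Lemma modG_K (U : 'M[E]_m) : mxmodule rG U -> mxmodule rK U.
Proof.
move=> /mxmoduleP modU; apply: HC_modK; last exact: modU.
by apply/mxmoduleP => h Hh; apply: modU; apply: (subsetP sHG).
Qed.

Lemma strict (U : 'M[E]_m) : mxmodule rG U -> U != 0 ->
  (exists2 y, y \in G & ~ inN G rX (c ^ y)%g) -> (d <= 3)%N -> (eb C U < 2 * ea C U)%N.
Proof.
move=> modU nzU [y Gy nNy] hd.
have modKU := modG_K modU.
have [modHU sUC] := modK_HC modKU.
apply: (mxsimple_exists modHU nzU) => [[W0 simW0 sW0U]].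
have [u0 Gu0 [T0 frT0 [hT0 eT0]]] := simple_iso simW0.
set g := (u0 * y^-1)%g.
have Gg : g \in G by rewrite groupM ?groupV.
set T := T0 *m rG g.
have GH := subsetP sHG.
have hT : forall h, h \in H -> T *m rG h = rX (f (h ^ y)%g) *m T.
  move=> h Hh; have Hh' : (h ^ g^-1)%g \in H by rewrite HJ ?groupV.
  rewrite /T -mulmxA -(repr_mxM rG Gg (GH _ Hh)) (conjgCV g h).
  rewrite (repr_mxM rG (GH _ Hh') Gg) mulmxA hT0 // -conjgM.
  by rewrite /g invMg invgK mulgKV mulmxA.
have frT : row_free T by rewrite /row_free mxrankMfree ?row_free_unit ?repr_mx_unit.
have simW := X_simple Gy frT hT.
have [modW nzW _] := simW.
have sWU : (<<T>> <= U)%MS.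
  rewrite genmxE /T; apply: mxmodule_trans modU Gg _.
  by rewrite eT0.
have nsub : ~~ (<<T>>%MS *m C <= <<T>>)%MS.
  apply/negP => sub; apply: nNy.
  have sTC : (T *m rG c <= T)%MS.
    by rewrite -(genmxE T) -(eqmxMr _ (genmxE T)).
  apply: (key_inN Gy frT hT (Q := T *m rG c *m pinvmx T)).
  by rewrite mulmxKpV.
have [dW modS] := swap_piece simW nsub.
have sSU : (<<T>> + <<T>> *m C <= U)%MS.
  by rewrite addsmx_sub sWU (submx_trans (submxMr _ sWU) sUC).
have nzS : (<<T>> + <<T>> *m C)%MS != 0.
  by apply: contraNneq nzW => S0; rewrite -submx0 -S0 addsmxSl.
have [V' [modV' ltV' ha hb]] := splitK modKU modS sSU nzS.
have /andP[_ /implyP i2] := lemA modV'.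
have [s1 s2] := eig_swap CC two_nz dW.
have rW : \rank <<T>>%MS = d by rewrite genmxE; apply/eqP.
have dg := d_gt0.
rewrite ha hb s1 s2 rW; move: (i2 hd) => hh; natlia.
Qed.


Lemma final (U : 'M[E]_m) : mxmodule rG U -> U != 0 ->
  ((d <= 2)%N -> (ea C U * 2)%N = \rank U /\ (eb C U * 2)%N = \rank U) /\
  ((exists2 y, y \in G & ~ inN G rX (c ^ y)%g) -> (d <= 3)%N ->
     (eb C U * 3 < \rank U * 2)%N).
Proof.
move=> modU nzU.
have modKU := modG_K modU.
have [_ sUC] := modK_HC modKU.
have hs := eig_split CC two_nz sUC.
split.
  move=> hd; have /andP[/implyP i1 _] := lemA modKU.
  by move/eqP: (i1 hd) => e; split; natlia.
move=> hy hd; have := strict modU nzU hy hd => hh; natlia.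
Qed.

End Main.
Lemma d_le3 (E : fieldType) d (P : 'M[E]_(d, 2 * 2)) : (2%:R : E) != 0 ->
  row_free P -> in_trace_zero P -> (d <= 3)%N.
Proof.
move=> h2 frP tz; rewrite leqNgt; apply/negP => d4.
have rP : \rank P = d by apply/eqP.
have fullP : row_full P.
  rewrite /row_full; apply/eqP/anti_leq; rewrite rank_leq_col rP //.
have s1 : (mxvec (1%:M : 'M[E]_2) <= P)%MS by apply: submx_full.
have e := mulmxKpV s1.
have : \tr (vec_mx (mxvec (1%:M : 'M[E]_2))) = 0.
  rewrite -e mulmx_sum_row linear_sum /= linear_sum /= big1 // => i _.
  by rewrite linearZ /= linearZ /= tz mulr0.
by rewrite (@mxvecK _ 2 2) mxtrace1; apply/eqP.
Qed.
Lemma d_le2 (E : closedFieldType) (rT : finGroupType) (Gam : {group rT}) d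
  (rX : mx_representation E Gam d) n :
  mx_irreducible rX -> (1 < n)%N -> (Gam \isog 'D_(2 * n))%g -> (d <= 2)%N.
Proof.
move=> irrX n1 iso.
have hom := isog_hom iso.
have Gd := Grp_dihedral n1; rewrite -mul2n in Gd.
have := Gd _ Gam; rewrite hom => /esym/existsP [[x y]] /= /eqP [defG xn y2 xy].
have Gx : x \in Gam by rewrite -defG (subsetP (joing_subl _ _)) ?cycle_id.
have Gy : y \in Gam by rewrite -defG (subsetP (joing_subr _ _)) ?cycle_id.
have yy : (y * y = 1)%g by rewrite -y2 expgS expg1.
have yinv : (y^-1 = y)%g by apply/eqP; rewrite eq_invg_mul yy.
have yx : (y * x = x^-1 * y)%g.
  by rewrite -xy conjgE yinv !mulgA -(mulgA _ y y) yy mulg1.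
have dpos : (0 < d)%N.
  case: irrX => _ nz _; rewrite lt0n; apply: contraNneq nz => d0.
  by apply/eqP/matrixP => i; rewrite d0 in i *; case: i.
have : size (char_poly (rX x)) != 1%N by rewrite size_char_poly; rewrite eqSS -lt0n.
case/closed_rootP => lam; rewrite -eigenvalue_root_char => /eigenvalueP [v hv nzv].
have Lx : x \in rstabs rX v by rewrite inE Gx /= hv scalemx_sub.
have Lxi : (x^-1 \in rstabs rX v)%g by rewrite groupV.
have vxi : (v *m rX (x^-1)%g <= v)%MS by move: Lxi; rewrite inE => /andP[].
set M := (v + v *m rX y)%MS.
have modM : mxmodule rX <<M>>%MS.
  rewrite (eqmx_module _ (genmxE M)) /mxmodule -defG join_subG !cycle_subG.
  apply/andP; split; rewrite inE ?Gx ?Gy /=; rewrite addsmxMr addsmx_sub; apply/andP; split.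
  - by rewrite hv (submx_trans (scalemx_sub _ (submx_refl v))) // addsmxSl.
  - rewrite -mulmxA -repr_mxM // yx repr_mxM ?groupV // mulmxA.
    by apply: submx_trans (submxMr _ vxi) _; rewrite addsmxSr.
  - by rewrite addsmxSr.
  - by rewrite -mulmxA -repr_mxM // yy repr_mx1 mulmx1 addsmxSl.
have nzM : <<M>>%MS != 0.
  rewrite (eqmx_eq0 (genmxE M)); apply: contraNneq nzv => M0.
  by rewrite -submx0 -M0 addsmxSl.
case: irrX => _ _ /(_ _ modM (submx1 _) nzM) s1M.
have := mxrankS s1M; rewrite mxrank1 genmxE => hd.
apply: leq_trans hd _.
case: (mxrank_adds_leqif v (v *m rX y)) => h _.
apply: leq_trans h _.
by rewrite -[2%N]/(1 + 1)%N leq_add ?rank_leq_row.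
Qed.
Theorem lemma4p8
  (E : closedFieldType) (hE : [pchar E] =i pred0)
  (gT rT : finGroupType) (G H : {group gT}) (hHG : (H <| G)%g)
  (f : {morphism H >-> rT})
  (sigma : rT -> 'M[E]_2)
  (hsigma : proj_embedding ((f @* H)%g) sigma)
  (hirr : irreducible_on_PV ((f @* H)%g) sigma)
  (hGam : (exists n : nat, [/\ odd n, (3 <= n)%N & ((f @* H)%g \isog 'D_(2 * n))%g])
          \/ ((f @* H)%g \isog 'Alt_('I_4))%g \/ ((f @* H)%g \isog 'Sym_('I_4))%g
          \/ ((f @* H)%g \isog 'Alt_('I_5))%g)
  (d : nat) (rX : mx_representation E ((f @* H)%g) d) (P : 'M[E]_(d, 2 * 2))
  (hX : is_Psi sigma rX P)
  (c0 : gT) (hc0G : c0 \in G) (hc0 : #[c0]%g = 2%N)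
  (hnoteven : forall c, c \in (c0 ^: G)%g -> ~ even G rX c)
  (hnotN : exists2 c, c \in (c0 ^: G)%g & ~ inN G rX c)
  (m : nat) (rG : mx_representation E G m) (B : 'M[E]_(d, m))
  (hind : is_induced rX rG B)
  (U : 'M[E]_m) (hU : mxmodule rG U) (hUs : mxsimple rG U)
  (c : gT) (hc : c \in (c0 ^: G)%g) :
  ((exists n : nat, [/\ odd n, (3 <= n)%N & ((f @* H)%g \isog 'D_(2 * n))%g]) ->
     (\rank (U :&: eigenspace (rG c) 1)%MS * 2 = \rank U)%N /\
     (\rank (U :&: eigenspace (rG c) (-1))%MS * 2 = \rank U)%N)
  /\
  (((f @* H)%g \isog 'Alt_('I_4))%g \/ ((f @* H)%g \isog 'Sym_('I_4))%g \/ ((f @* H)%g \isog 'Alt_('I_5))%g ->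
     (\rank (U :&: eigenspace (rG c) (-1))%MS * 3 < \rank U * 2)%N).
Proof.
have [frP tzP hPX irrX fX] := hX.
have [frB hBH hBsum _] := hind.
have [modU nzU _] := hUs.
have h2 : (2%:R : E) != 0 by have := hE 2; rewrite !inE /= => ->.
case/imsetP: hc => a Ga ca.
have hcG : c \in G by rewrite ca groupJ.
have hco : #[c]%g = 2%N by rewrite ca orderJ.
have hc2 : (c * c = 1)%g by rewrite -(expg_order c) hco expgS expg1.
have hne : forall u, u \in G -> ~ even G rX (c ^ u)%g.
  by move=> u Gu; apply: hnoteven; rewrite ca -conjgM memJ_class ?groupM.
have [p1 p2] := final hHG irrX fX frB hBH hBsum hcG hc2 hco hne hE modU nzU.
split.
  case=> n [_ n3 iso]; apply: p1.
  by apply: (d_le2 irrX _ iso); apply: leq_trans n3.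
move=> _; apply: p2; last exact: d_le3 h2 frP tzP.
case: hnotN => c1 hc1 nN; case/imsetP: hc1 => b Gb cb.
exists (a^-1 * b)%g; first by rewrite groupM ?groupV.
by rewrite ca -conjgM mulKVg -cb.
Qed.
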